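(* Let $f_\omega\in\ell_1([0,\omega])$ be defined by $f_\omega(\omega)=1$ and $f_\omega(n)=0$ for $n<\omega$. Then $f_\omega\in d_{1/2}^{\omega}(B_{\ell_1([0,\omega])})$.
   Context: $[0,\omega]$ is the ordinal interval with the order topology, $\ell_1([0,\omega])$ is identified with $C([0,\omega])^*$ with the corresponding weak$^*$-topology. For $x\in C([0,\omega]),t\in\mathbb R$, $H(x,t)=\{h: h(x)>t\}$; a weak$^*$-slice of a weak$^*$-compact $K$ is a nonempty $H(x,t)\cap K$; $d_\varepsilon K$ is $K$ minus the union of all weak$^*$-slices of $K$ of norm diameter $<\varepsilon$; $d_\varepsilon^0K=K$, $d_\varepsilon^{\beta+1}K=d_\varepsilon(d_\varepsilon^\beta K)$, $d_\varepsilon^\beta K=\bigcap_{\mu<\beta}d_\varepsilon^\mu K$ for limit $\beta$. *)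

(* Defs.v *)
From Stdlib Require Import Reals.
Open Scope R_scope.

(* [0,omega] = nat ∪ {omega}.  An element of C([0,omega]) is a pair (x, xw)
   with x : nat -> R, xw = x(omega), continuity at omega meaning Un_cv x xw.
   An element h of ell_1([0,omega]) = C([0,omega])^* is a pair (a, b) with
   a : nat -> R absolutely summable (a n = h(n)) and b = h(omega). *)
Definition Fnl : Type := ((nat -> R) * R)%type.

Definition fsub (h g : Fnl) : Fnl :=
  (fun n => fst h n - fst g n, snd h - snd g).

Definition in_l1 (h : Fnl) : Prop :=
  exists s, infinite_sum (fun n => Rabs (fst h n)) s.

Definition norm_le (h : Fnl) (d : R) : Prop :=
  exists s, infinite_sum (fun n => Rabs (fst h n)) s /\ s + Rabs (snd h) <= d.

Definition eval (h : Fnl) (xs : nat -> R) (xw : R) (v : R) : Prop :=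
  exists s, infinite_sum (fun n => fst h n * xs n) s /\ v = s + snd h * xw.

Definition slice (K : Fnl -> Prop) (xs : nat -> R) (xw t : R) : Fnl -> Prop :=
  fun h => K h /\ exists v, eval h xs xw v /\ v > t.

Definition diam_lt (S : Fnl -> Prop) (eps : R) : Prop :=
  exists d, d < eps /\ forall h g, S h -> S g -> norm_le (fsub h g) d.

(* d_eps K: K minus the union of all weak*-slices of K of diameter < eps
   (h belongs to the slice, so the slice is nonempty). *)
Definition dset (eps : R) (K : Fnl -> Prop) : Fnl -> Prop :=
  fun h => K h /\
    ~ (exists xs xw t, Un_cv xs xw /\ slice K xs xw t h /\
                       diam_lt (slice K xs xw t) eps).

Fixpoint dset_iter (eps : R) (n : nat) (K : Fnl -> Prop) : Fnl -> Prop :=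
  match n with
  | O => K
  | S m => dset eps (dset_iter eps m K)
  end.

Definition dset_omega (eps : R) (K : Fnl -> Prop) : Fnl -> Prop :=
  fun h => forall n, dset_iter eps n K h.

Definition Ball : Fnl -> Prop := fun h => in_l1 h /\ norm_le h 1.

Definition f_omega : Fnl := (fun _ => 0, 1).

(* Main.v *)
Require Import Defs.
From Stdlib Require Import Reals.
From Stdlib Require Import Lra Lia FunctionalExtensionality.
Open Scope R_scope.

Fixpoint fsum (f : nat -> R) (n : nat) : R :=
  match n with O => 0 | S n => fsum f n + f n end.

Lemma sum_f_R0_fsum f n : sum_f_R0 f n = fsum f (S n).
Proof. induction n; simpl in *. ring. rewrite IHn. ring. Qed.

Lemma fsum_shift f k L : fsum f (k + L) = fsum f k + fsum (fun j => f (k + j)%nat) L.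
Proof. induction L; simpl. rewrite Nat.add_0_r; ring.
  rewrite Nat.add_succ_r; simpl; rewrite IHL; ring. Qed.

Lemma fsum_ext f g n : (forall i, (i < n)%nat -> f i = g i) -> fsum f n = fsum g n.
Proof. induction n; intros H; simpl. reflexivity.
  rewrite IHn by (intros; apply H; lia). rewrite (H n) by lia. reflexivity. Qed.

Lemma fsum_const c L : fsum (fun _ => c) L = INR L * c.
Proof. induction L; simpl fsum. simpl; ring. rewrite IHL, S_INR; ring. Qed.

Lemma fsum_scal c f L : fsum (fun j => c * f j) L = c * fsum f L.
Proof. induction L; simpl. ring. rewrite IHL; ring. Qed.

Lemma fsum_gt f t L : (0 < L)%nat -> (forall j, f j > t) -> fsum f L > INR L * t.
Proof. intros HL H. induction L. lia. simpl fsum. rewrite S_INR.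
  destruct L. simpl. specialize (H 0%nat). lra.
  assert (fsum f (S L) > INR (S L) * t) by (apply IHL; lia). specialize (H (S L)). lra. Qed.

Lemma fsum_stable f N p : (forall i, (N <= i)%nat -> f i = 0) -> fsum f (N + p) = fsum f N.
Proof. intros H; induction p; simpl. rewrite Nat.add_0_r; ring.
  rewrite Nat.add_succ_r; simpl; rewrite IHp, H by lia; ring. Qed.

Lemma fsum_fin f N : (forall i, (N <= i)%nat -> f i = 0) -> infinite_sum f (fsum f N).
Proof. intros H eps He. exists N. intros n Hn. rewrite sum_f_R0_fsum.
  replace (S n) with (N + (S n - N))%nat by lia. rewrite fsum_stable by exact H.
  unfold Rdist. rewrite Rminus_diag, Rabs_R0. lra. Qed.

Lemma fsum_nonneg f n : (forall i, 0 <= f i) -> 0 <= fsum f n.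
Proof. intros H; induction n; simpl. lra. specialize (H n); lra. Qed.

Lemma sum_nonneg f s : (forall i, 0 <= f i) -> infinite_sum f s -> 0 <= s.
Proof. intros H Hs. destruct (Rle_or_lt 0 s) as [|Hlt]; auto.
  destruct (Hs (-s)) as [N HN]; [lra|]. specialize (HN N (le_n _)).
  rewrite sum_f_R0_fsum in HN. pose proof (fsum_nonneg f (S N) H).
  unfold Rdist in HN. rewrite Rabs_right in HN by lra. lra. Qed.

Definition blk (k L : nat) (c : R) (i : nat) : R :=
  if (Nat.leb k i && Nat.ltb i (k + L))%bool then c else 0.

Lemma blk_in k L c i : (k <= i < k + L)%nat -> blk k L c i = c.
Proof. intros H; unfold blk. destruct (Nat.leb_spec k i), (Nat.ltb_spec i (k+L)); simpl; auto; lia. Qed.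

Lemma blk_out k L c i : (i < k \/ k + L <= i)%nat -> blk k L c i = 0.
Proof. intros H; unfold blk. destruct (Nat.leb_spec k i), (Nat.ltb_spec i (k+L)); simpl; auto; lia. Qed.

Lemma blk_gsum k L c g : infinite_sum (fun i => blk k L c i * g i) (c * fsum (fun j => g (k + j)%nat) L).
Proof.
  replace (c * fsum (fun j => g (k + j)%nat) L) with (fsum (fun i => blk k L c i * g i) (k + L)).
  apply fsum_fin. intros; rewrite blk_out by lia; ring.
  rewrite fsum_shift. rewrite (fsum_ext _ (fun _ => 0) k) by (intros; rewrite blk_out by lia; ring).
  rewrite fsum_const. rewrite <- fsum_scal. rewrite Rmult_0_r, Rplus_0_l.
  apply fsum_ext; intros; rewrite blk_in by lia; ring.
Qed.

Lemma blk_sum k L c : infinite_sum (blk k L c) (INR L * c).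
Proof.
  pose proof (blk_gsum k L c (fun _ => 1)).
  cbv beta in H; rewrite fsum_const in H.
  replace (blk k L c) with (fun i => blk k L c i * 1) by (apply functional_extensionality; intros; ring).
  replace (INR L * c) with (c * (INR L * 1)) by ring. exact H.
Qed.

Definition nu (k m : nat) : Fnl := (blk k (2 ^ m)%nat (/ 2 ^ m), 0).

Lemma INR_pow2 m : INR (2 ^ m)%nat = 2 ^ m.
Proof. rewrite pow_INR. simpl (INR 2). f_equal; ring. Qed.

Lemma pow2_pos m : 0 < 2 ^ m.
Proof. apply pow_lt; lra. Qed.

Lemma nu_ball k m : Ball (nu k m).
Proof.
  assert (Hs : infinite_sum (fun n => Rabs (fst (nu k m) n)) 1).
  { replace (fun n => Rabs (fst (nu k m) n)) with (blk k (2^m)%nat (/ 2^m)).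
    replace 1 with (INR (2^m)%nat * / 2^m). apply blk_sum.
    rewrite INR_pow2. field. apply Rgt_not_eq, pow2_pos.
    apply functional_extensionality; intros i; simpl.
    pose proof (pow2_pos m). unfold blk; destruct (_ && _)%bool; rewrite Rabs_right; auto with real.
    left; apply Rinv_0_lt_compat; auto. }
  split. exists 1; exact Hs. exists 1; split; auto. simpl. rewrite Rabs_R0; lra.
Qed.

Lemma nu_eval k m xs xw : eval (nu k m) xs xw (/ 2 ^ m * fsum (fun j => xs (k + j)%nat) (2 ^ m)%nat).
Proof. exists (/ 2 ^ m * fsum (fun j => xs (k + j)%nat) (2 ^ m)%nat). split.
  apply blk_gsum. simpl; ring. Qed.

Lemma dist_from_blk g h k n d :
  (forall i, Rabs (fst (fsub g h) i) = blk k (2^n)%nat (/ 2^n) i) -> snd g = snd h ->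
  norm_le (fsub g h) d -> 1 <= d.
Proof.
  intros Hp Hs [s [Hsum Hle]].
  replace (fun i => Rabs (fst (fsub g h) i)) with (blk k (2^n)%nat (/ 2^n)) in Hsum
    by (apply functional_extensionality; intros; rewrite Hp; auto).
  pose proof (uniqueness_sum _ _ _ Hsum (blk_sum k (2^n)%nat (/ 2^n))).
  rewrite INR_pow2 in H. rewrite Rinv_r in H by (apply Rgt_not_eq, pow2_pos).
  simpl in Hle. rewrite Hs, Rminus_diag, Rabs_R0 in Hle. lra.
Qed.

Lemma halves_dist k m d :
  norm_le (fsub (nu k m) (nu k (S m))) d \/ norm_le (fsub (nu (k + 2^m) m) (nu k (S m))) d -> 1 <= d.
Proof.
  assert (HL : (2 ^ S m = 2^m + 2^m)%nat) by (simpl; lia).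
  assert (Hc : / 2 ^ S m = / 2^m / 2) by (simpl; field; apply Rgt_not_eq, pow2_pos).
  pose proof (pow2_pos m) as Hp. pose proof (Rinv_0_lt_compat _ Hp) as Hp'.
  set (L := (2^m)%nat) in *.
  intros [H|H]; revert H; (apply (dist_from_blk _ _ k (S m)); [ | reflexivity]);
  intros i; unfold fsub, nu; cbn [fst]; rewrite HL, Hc.
  - destruct (Nat.lt_ge_cases i k).
    { rewrite !blk_out by lia. rewrite Rminus_0_r, Rabs_R0; auto. }
    destruct (Nat.lt_ge_cases i (k + L)).
    { rewrite !blk_in by lia. rewrite Rabs_right; lra. }
    destruct (Nat.lt_ge_cases i (k + (L + L))).
    { rewrite blk_out by lia. rewrite !blk_in by lia. rewrite Rabs_left1; lra. }
    rewrite !blk_out by lia. rewrite Rminus_0_r, Rabs_R0; auto.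
  - destruct (Nat.lt_ge_cases i k).
    { rewrite !blk_out by lia. rewrite Rminus_0_r, Rabs_R0; auto. }
    destruct (Nat.lt_ge_cases i (k + L)).
    { rewrite blk_out by lia. rewrite !blk_in by lia. rewrite Rabs_left1; lra. }
    destruct (Nat.lt_ge_cases i (k + (L + L))).
    { rewrite !blk_in by lia. rewrite Rabs_right; lra. }
    rewrite !blk_out by lia. rewrite Rminus_0_r, Rabs_R0; auto.
Qed.

Lemma eval_unique h xs xw v1 v2 : eval h xs xw v1 -> eval h xs xw v2 -> v1 = v2.
Proof. intros [s1 [H1 E1]] [s2 [H2 E2]]. rewrite (uniqueness_sum _ _ _ H1 H2) in E1. congruence. Qed.

Lemma pow2_nat_pos m : (0 < 2 ^ m)%nat.
Proof. induction m; simpl; lia. Qed.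

Lemma nu_D : forall n m k, (n <= m)%nat -> dset_iter (1/2) n Ball (nu k m).
Proof.
  induction n; intros m k Hm. simpl; apply nu_ball.
  destruct m as [|m]; [lia|]. simpl. split. apply IHn; lia.
  intros [xs [xw [t [Hcv [[HK [v [Hev Hvt]]] [d [Hd Hdiam]]]]]]].
  pose proof (eval_unique _ _ _ _ _ Hev (nu_eval k (S m) xs xw)) as Ev.
  set (v1 := / 2 ^ m * fsum (fun j => xs (k + j)%nat) (2 ^ m)%nat).
  set (v2 := / 2 ^ m * fsum (fun j => xs (k + 2^m + j)%nat) (2 ^ m)%nat).
  assert (Hv : v = (v1 + v2) / 2).
  { rewrite Ev. unfold v1, v2.
    replace (2 ^ S m)%nat with (2^m + 2^m)%nat by (simpl; lia).
    rewrite fsum_shift.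
    rewrite (fsum_ext (fun j => xs (k + (2 ^ m + j))%nat) (fun j => xs (k + 2^m + j)%nat))
      by (intros; rewrite Nat.add_assoc; auto).
    simpl pow. field. apply Rgt_not_eq, pow2_pos. }
  assert (Hs1 : forall g, dset_iter (1/2) n Ball g -> (exists v, eval g xs xw v /\ v > t) ->
     norm_le (fsub g (nu k (S m))) d).
  { intros g Hg Hgv. apply Hdiam. split; auto. split; auto. exists v; auto. }
  destruct (Rlt_or_le t v1) as [H1|H1].
  - assert (1 <= d); [|lra]. apply (halves_dist k m d). left. apply Hs1. apply IHn; lia.
    exists v1. split; auto. apply nu_eval.
  - assert (1 <= d); [|lra]. apply (halves_dist k m d). right. apply Hs1. apply IHn; lia.
    exists v2. split; [apply nu_eval|lra].
Qed.

Theorem mainTheorem8 : dset_omega (1/2) Ball f_omega.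
Proof.
  intros n. induction n.
  - simpl. split. exists 0. replace (fun n => Rabs (fst f_omega n)) with (fun _ : nat => 0).
    apply (fsum_fin _ 0). auto. apply functional_extensionality; intros; simpl; rewrite Rabs_R0; auto.
    exists 0. split. replace (fun n => Rabs (fst f_omega n)) with (fun _ : nat => 0).
    apply (fsum_fin _ 0). auto. apply functional_extensionality; intros; simpl; rewrite Rabs_R0; auto.
    simpl. rewrite Rabs_R1; lra.
  - simpl. split; auto.
    intros [xs [xw [t [Hcv [[HK [v [Hev Hvt]]] [d [Hd Hdiam]]]]]]].
    assert (Hxw : xw > t).
    { destruct Hev as [s [Hs E]].
      assert (s = 0). { apply (uniqueness_sum _ _ _ Hs). 
        replace 0 with (fsum (fun n => fst f_omega n * xs n) 0) by reflexivity.
        apply fsum_fin. intros; simpl; ring. }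
      simpl in E. lra. }
    destruct (Hcv (xw - t)) as [N HN]; [lra|].
    assert (Hin : dset_iter (1/2) n Ball (nu N n)) by (apply nu_D; lia).
    assert (norm_le (fsub (nu N n) f_omega) d).
    { apply Hdiam.
      - split; auto. eexists; split; [apply nu_eval|].
        pose proof (pow2_pos n).
        assert (fsum (fun j => xs (N + j)%nat) (2 ^ n)%nat > INR (2^n)%nat * t).
        { apply fsum_gt. apply pow2_nat_pos. intros j. specialize (HN (N + j)%nat ltac:(lia)).
          unfold Rdist in HN. apply Rabs_def2 in HN. lra. }
        rewrite INR_pow2 in H0.
        apply Rmult_gt_compat_l with (r := / 2^n) in H0; [|apply Rinv_0_lt_compat; auto].
        rewrite <- Rmult_assoc, Rinv_l in H0 by lra. lra.
      - split; auto. exists v; auto. }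
    destruct H as [s [Hs Hle]].
    assert (0 <= s) by (eapply sum_nonneg; [|exact Hs]; intros; apply Rabs_pos).
    simpl in Hle. replace (0 - 1) with (-(1)) in Hle by ring. rewrite Rabs_Ropp, Rabs_R1 in Hle. lra.
Qed.
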